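(* Let $f$ be a real function infinitely differentiable on a neighborhood of $0$, and write $c_i^f=f^{(i)}(0)$. Let $q$ be a positive integer and $w\in\mathbb{R}$. For $n\in\mathbb{N}_0$ put $u_n=\lfloor n/q\rfloor$ and $v_n=n \bmod q$, and define \[ a_n=\sum_{i=0}^{n}m_{n,i}\,c_i^f,\qquad m_{n,i}=\delta_{v_{n-i},0}\,\frac{(-1)^{u_{n-i}}\,w^{\llbracket u_{n-i}\rrbracket}}{(v_n+q\,u_i)!\;u_{n-i}!}. \] Then the function $\mathcal{A}^{f,D_1}(x)=\exp(wx^q)\sum_{n=0}^{\infty}a_nx^n$ matches all derivatives of $f$ at $0$; precisely, for every $N\in\mathbb{N}_0$, the function $x\mapsto\exp(wx^q)\sum_{n=0}^{N}a_nx^n$ satisfies \[ \frac{d^m}{dx^m}\Big[\exp(wx^q)\sum_{n=0}^{N}a_nx^n\Big]_{x=0}=f^{(m)}(0)\qquad\text{for all }0\le m\le N . \]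
   Context: $\delta_{j,0}$ is the Kronecker delta, $\lfloor\cdot\rfloor$ the floor function, and $n\bmod q$ the remainder of $n$ upon division by $q$. The generalized exponentiation is defined by $x^{\llbracket y\rrbracket}=1$ if $x=y=0$, and $x^{\llbracket y\rrbracket}=x^y$ otherwise (so in particular $0^{\llbracket 0\rrbracket}=1$, allowing $w=0$). *)

(* Defs.v *)
From Stdlib Require Import Reals Arith.
From Coquelicot Require Import Coquelicot.
Open Scope R_scope.

Definition gpow (x : R) (y : nat) : R :=
  if Req_EM_T x 0 then (if Nat.eqb y 0 then 1 else x ^ y) else x ^ y.

Definition kdelta0 (j : nat) : R := if Nat.eqb j 0 then 1 else 0.

Definition uq (q n : nat) : nat := Nat.div n q.
Definition vq (q n : nat) : nat := Nat.modulo n q.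

Definition cf (f : R -> R) (i : nat) : R := Derive_n f i 0.

Definition mcoef (q : nat) (w : R) (n i : nat) : R :=
  kdelta0 (vq q (n - i)) *
  ((-1) ^ (uq q (n - i)) * gpow w (uq q (n - i)) /
   (INR (fact (vq q n + q * uq q i)) * INR (fact (uq q (n - i))))).

Definition acoef (f : R -> R) (q : nat) (w : R) (n : nat) : R :=
  sum_f_R0 (fun i => mcoef q w n i * cf f i) n.

Definition approxA (f : R -> R) (q : nat) (w : R) (N : nat) (x : R) : R :=
  exp (w * x ^ q) * sum_f_R0 (fun n => acoef f q w n * x ^ n) N.

(* Main.v *)
Require Import Defs.
From Stdlib Require Import Reals Arith Lia Lra.
From Coquelicot Require Import Coquelicot.
Open Scope R_scope.

Lemma rad_inf (a : nat -> R) : (forall r, CV_disk a r) ->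
  forall x, Rbar_lt (Rabs x) (CV_radius a).
Proof.
  intros H x. apply Rbar_lt_le_trans with (Finite (Rabs x + 1)).
  simpl; lra.
  destruct (Lub_Rbar_correct (CV_disk a)) as [Hub _].
  apply Hub. apply H.
Qed.

Lemma CV_disk_abs (a : nat -> R) r : CV_disk a r -> CV_disk (fun n => Rabs (a n)) r.
Proof.
  unfold CV_disk. apply ex_series_ext. intro n.
  rewrite !Rabs_mult, Rabs_Rabsolu. reflexivity.
Qed.

Lemma CV_disk_mult (a b : nat -> R) : (forall r, CV_disk a r) -> (forall r, CV_disk b r) ->
  forall r, CV_disk (PS_mult a b) r.
Proof.
  intros Ha Hb r. unfold CV_disk.
  apply (@ex_series_le R_AbsRing R_CompleteNormedModule) with (b := fun n => PS_mult (fun n => Rabs (a n)) (fun n => Rabs (b n)) n * (Rabs r) ^ n).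
  - intro n. change norm with Rabs. rewrite Rabs_Rabsolu, Rabs_mult, <- RPow_abs.
    apply Rmult_le_compat_r. apply pow_le, Rabs_pos.
    unfold PS_mult. eapply Rle_trans. apply Rsum_abs.
    right. apply sum_eq. intros; apply Rabs_mult.
  - apply ex_pseries_R. apply ex_pseries_mult; apply rad_inf; intro; apply CV_disk_abs; auto.
Qed.

Lemma fin_sum (s : nat -> R) N : (forall n, (N < n)%nat -> s n = 0) ->
  forall n, (N <= n)%nat -> sum_f_R0 s n = sum_f_R0 s N.
Proof.
  intros H n Hn. induction Hn. reflexivity.
  simpl. rewrite IHHn, H by lia. ring.
Qed.

Lemma fin_series (s : nat -> R) N : (forall n, (N < n)%nat -> s n = 0) ->
  is_series s (sum_f_R0 s N).
Proof.
  intros H. apply is_series_Reals. intros eps Heps. exists N. intros n Hn.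
  rewrite (fin_sum s N H n) by lia. unfold R_dist. rewrite Rminus_diag, Rabs_R0. lra.
Qed.

Lemma fin_pseries (a : nat -> R) N : (forall n, (N < n)%nat -> a n = 0) ->
  forall x, is_pseries a x (sum_f_R0 (fun n => a n * x ^ n) N).
Proof.
  intros H x. apply is_pseries_R. apply fin_series. intros n Hn. rewrite H by auto. ring.
Qed.

Lemma fin_CV (a : nat -> R) N : (forall n, (N < n)%nat -> a n = 0) ->
  forall r, CV_disk a r.
Proof.
  intros H r. unfold CV_disk. eexists. apply fin_series with (N := N).
  intros n Hn. rewrite H by auto. rewrite Rmult_0_l, Rabs_R0. reflexivity.
Qed.

Lemma coef_derive (a : nat -> R) m : (forall r, CV_disk a r) ->
  Derive_n (PSeries a) m 0 = INR (fact m) * a m.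
Proof.
  intros H. rewrite Derive_n_PSeries by (apply rad_inf; auto).
  rewrite PSeries_0. unfold PS_derive_n. simpl. field.
Qed.

Definition bco (q : nat) (w : R) (n : nat) : R :=
  if Nat.eqb (n mod q) 0 then w ^ (n / q) / INR (fact (n / q)) else 0.

Lemma bco_sum q w x : (0 < q)%nat -> forall n,
  sum_f_R0 (fun n => bco q w n * x ^ n) n =
  sum_f_R0 (fun j => / INR (fact j) * (w * x ^ q) ^ j) (n / q).
Proof.
  intros Hq n. induction n.
  - rewrite Nat.div_0_l by lia. simpl. unfold bco. rewrite Nat.mod_0_l by lia.
    simpl. rewrite Nat.div_0_l by lia. simpl. field.
  - assert (Hd := Nat.div_mod n q ltac:(lia)).
    assert (Hb := Nat.mod_bound_pos n q ltac:(lia) Hq).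
    set (a := (n / q)%nat) in *. set (r := (n mod q)%nat) in *.
    simpl sum_f_R0 at 1. rewrite IHn.
    destruct (Nat.eq_dec (S r) q) as [E|E].
    + assert (E1 : 0%nat = S n mod q) by (apply Nat.mod_unique with (S a); lia).
      assert (E2 : S a = (S n / q)%nat) by (apply Nat.div_unique with 0%nat; lia).
      rewrite <- E2, tech5. unfold bco. rewrite <- E1, <- E2. simpl Nat.eqb. cbv iota.
      replace (x * x ^ n) with ((x ^ q) ^ (S a)).
      rewrite Rpow_mult_distr. field. apply INR_fact_neq_0.
      rewrite <- pow_mult. replace (q * S a)%nat with (S n) by lia. reflexivity.
    + assert (E1 : S r = S n mod q) by (apply Nat.mod_unique with a; lia).
      assert (E2 : a = (S n / q)%nat) by (apply Nat.div_unique with (S r); lia).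
      rewrite <- E2. unfold bco. rewrite <- E1. simpl Nat.eqb. cbv iota. ring.
Qed.

Lemma bco_exp q w x : (0 < q)%nat -> is_pseries (bco q w) x (exp (w * x ^ q)).
Proof.
  intros Hq. apply is_pseries_R. apply is_series_Reals.
  assert (He := is_exp_Reals (w * x ^ q)). apply is_pseries_R, is_series_Reals in He.
  intros eps Heps. destruct (He eps Heps) as [N0 HN]. exists (N0 * q)%nat.
  intros n Hn. rewrite bco_sum by auto. apply HN.
  apply Nat.div_le_lower_bound; lia.
Qed.

Lemma bco_CV q w : (0 < q)%nat -> forall r, CV_disk (bco q w) r.
Proof.
  intros Hq r. unfold CV_disk. exists (exp (Rabs w * Rabs r ^ q)).
  apply (is_series_ext (fun n => bco q (Rabs w) n * Rabs r ^ n)).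
  - intro n. unfold bco. destruct (Nat.eqb _ 0).
    + rewrite Rabs_mult, Rabs_div, <- !RPow_abs, (Rabs_right (INR _)). reflexivity.
      apply Rle_ge, pos_INR. apply INR_fact_neq_0.
    + rewrite !Rmult_0_l, ?Rabs_R0. reflexivity.
  - apply is_pseries_R, bco_exp; auto.
Qed.

Lemma mcoef_eq f q w n i : (0 < q)%nat -> (i <= n)%nat ->
  mcoef q w n i * cf f i = (cf f i / INR (fact i)) * bco q (-w) (n - i).
Proof.
  intros Hq Hi. unfold mcoef, bco, kdelta0, uq, vq.
  destruct (Nat.eqb_spec ((n - i) mod q) 0) as [E|E].
  - assert (Hd := Nat.div_mod (n - i) q ltac:(lia)).
    assert (Hdi := Nat.div_mod i q ltac:(lia)).
    assert (Hbi := Nat.mod_bound_pos i q ltac:(lia) Hq).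
    set (u := ((n - i) / q)%nat) in *.
    assert (En : (i mod q)%nat = (n mod q)%nat).
    { apply Nat.mod_unique with (u + i / q)%nat; lia. }
    replace (n mod q + q * (i / q))%nat with i by lia.
    replace (gpow w u) with (w ^ u).
    + replace (-w) with (-1 * w) by ring. rewrite Rpow_mult_distr. field.
      split; apply INR_fact_neq_0.
    + unfold gpow. destruct (Req_EM_T w 0); auto.
      destruct (Nat.eqb_spec u 0); auto. rewrite e0. reflexivity.
  - ring.
Qed.

Theorem proposition3 :
  forall (f : R -> R),
    (exists eps : R, 0 < eps /\
       forall (k : nat) (x : R), Rabs x < eps -> ex_derive_n f k x) ->
  forall (q : nat), (0 < q)%nat ->
  forall (w : R) (N m : nat), (m <= N)%nat ->
    Derive_n (approxA f q w N) m 0 = Derive_n f m 0.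
Proof.
  intros f _ q Hq w N m HmN.
  set (B := bco q w). set (B' := bco q (-w)).
  set (t' := fun i => if Nat.leb i N then cf f i / INR (fact i) else 0).
  set (P := fun n => if Nat.leb n N then acoef f q w n else 0).
  set (Q := PS_mult t' B').
  assert (HB : forall r, CV_disk B r) by (apply bco_CV; auto).
  assert (HB' : forall r, CV_disk B' r) by (apply bco_CV; auto).
  assert (Pfin : forall n, (N < n)%nat -> P n = 0).
  { intros n Hn. unfold P. destruct (Nat.leb_spec n N); [lia|auto]. }
  assert (tfin : forall n, (N < n)%nat -> t' n = 0).
  { intros n Hn. unfold t'. destruct (Nat.leb_spec n N); [lia|auto]. }
  assert (HP : forall r, CV_disk P r) by (apply fin_CV with N; auto).
  assert (Ht : forall r, CV_disk t' r) by (apply fin_CV with N; auto).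
  assert (HQ : forall r, CV_disk Q r) by (apply CV_disk_mult; auto).
  assert (PQ : forall n, (n <= N)%nat -> P n = Q n).
  { intros n Hn. unfold P, Q, PS_mult, acoef. destruct (Nat.leb_spec n N); [|lia].
    apply sum_eq. intros i Hi. rewrite mcoef_eq by auto. unfold t'.
    destruct (Nat.leb_spec i N); [reflexivity|lia]. }
  transitivity (Derive_n (PSeries (PS_mult B P)) m 0).
  { apply Derive_n_ext. intro x. symmetry. apply is_pseries_unique.
    unfold approxA. apply is_pseries_mult.
    - apply bco_exp; auto.
    - replace (sum_f_R0 (fun n => acoef f q w n * x ^ n) N)
        with (sum_f_R0 (fun n => P n * x ^ n) N).
      apply fin_pseries; auto.
      apply sum_eq. intros i Hi. unfold P. destruct (Nat.leb_spec i N); [reflexivity|lia].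
    - apply rad_inf; auto.
    - apply rad_inf; auto. }
  rewrite coef_derive by (apply CV_disk_mult; auto).
  transitivity (INR (fact m) * PS_mult B Q m).
  { f_equal. unfold PS_mult. apply sum_eq. intros i Hi. rewrite PQ by lia. reflexivity. }
  rewrite <- coef_derive by (apply CV_disk_mult; auto).
  transitivity (Derive_n (PSeries t') m 0).
  { apply Derive_n_ext. intro x.
    rewrite PSeries_mult by (apply rad_inf; auto).
    unfold Q. rewrite PSeries_mult by (apply rad_inf; auto).
    rewrite (is_pseries_unique B x _ (bco_exp q w x Hq)).
    rewrite (is_pseries_unique B' x _ (bco_exp q (-w) x Hq)).
    rewrite Rmult_comm, Rmult_assoc, <- exp_plus.
    replace (-w * x ^ q + w * x ^ q) with 0 by ring. rewrite exp_0. ring. }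
  rewrite coef_derive by auto. unfold t'. destruct (Nat.leb_spec m N); [|lia].
  unfold cf. field. apply INR_fact_neq_0.
Qed.
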